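(* Let $\mathcal X$ be a Banach space, $E\subset\mathcal X$ convex, $\hat\phi_i:\mathcal X\to\mathbb R$ ($i=0,\dots,j$), $\hat\psi:\mathcal X\to\mathbb R^k$ with $k\ge1$. Let $\bar e\in E$ be a minimizer of (OP) with $\hat\phi_0(\bar e)=0$, and assume (C5). Let $y\in T^\flat_E(\bar e)$ satisfy $D\hat\phi_i(\bar e)(y)\le0$ for $i\in\hat I_A$, $D\hat\psi(\bar e)(y)=0$, and $T_E^{\flat(2)}(\bar e,y)\ne\emptyset$. Set $\hat I_0'=\hat I_N\cup\{i\in\hat I_A:D\hat\phi_i(\bar e)(y)<0\}$, $\hat I_0''=\{0,\dots,j\}\setminus\hat I_0'$, $$\mathcal K=\{D\hat\Phi_{\hat I_0''}(\bar e)(x)+\tfrac12D^2\hat\Phi_{\hat I_0''}(\bar e)(y):x\in T_E^{\flat(2)}(\bar e,y)\}\subset\mathbb R^{1+j+k},$$ $$\mathcal K^{\hat\psi}=\{D\hat\psi(\bar e)(x)+\tfrac12D^2\hat\psi(\bar e)(y):x\in T_E^{\flat(2)}(\bar e,y)\}\subset\mathbb R^k.$$ Then $\mathcal K$ and $\mathcal K^{\hat\psi}$ are convex. Moreover, let $Y=(Y_0,\dots,Y_j)^\top$ with $Y_i=D\hat\phi_i(\bar e)(y)$ for $i\in\hat I_A$ and $Y_i=0$ otherwise, and $Z=(-\infty,0)^{j+1}-\{\lambda(\hat\phi(\bar e)+Y):\lambda>0\}$, where $\hat\phi=(\hat\phi_0,\dots,\hat\phi_j)^\top$. If there is no $\ell\in\mathbb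 R^{1+j+k}\setminus\{0\}$ with $$\ell^\top\big(D\hat\Phi_{\hat I_0''}(\bar e)(x)+\tfrac12D^2\hat\Phi_{\hat I_0''}(\bar e)(y)\big)\le\ell^\top(z^\top,0)^\top\quad\forall x\in T_E^{\flat(2)}(\bar e,y),\ \forall z\in Z,$$ then the affine hull $\mathrm{aff}\,\mathcal K^{\hat\psi}$ is a linear subspace of $\mathbb R^k$ of dimension $D(\mathcal K^{\hat\psi})>0$, and there exist $h_1,\dots,h_{D(\mathcal K^{\hat\psi})+1}\in T^{\flat(2)}_E(\bar e,y)$ and $\delta_0>0$ such that $$B_{\mathrm{aff}\,\mathcal K^{\hat\psi}}(\delta_0)\subseteq\mathrm{Int}\,\mathrm{co}\{D\hat\psi(\bar e)(h_l)+\tfrac12D^2\hat\psi(\bar e)(y)\}_{l=1}^{D(\mathcal K^{\hat\psi})+1}$$ and $D\hat\phi_i(\bar e)(h_l)+\frac12D^2\hat\phi_i(\bar e)(y)<0$ for all $l=1,\dots,D(\mathcal K^{\hat\psi})+1$ and all $i\in\hat I_0''$. Here $B_{\mathrm{aff}\,\mathcal K^{\hat\psi}}(\delta_0)$ is the closed ball of radius $\delta_0$ centered at $0$ in that subspace, and Int is the interior relative to that subspace.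
   Context: (OP): minimize $\hat\phi_0(e)$ over $e\in E$ subject to $\hat\phi_i(e)\le0$ ($i=1,\dots,j$) and $\hat\psi(e)=0$. $\hat\Phi=(\hat\phi_0,\dots,\hat\phi_j,\hat\psi_1,\dots,\hat\psi_k)^\top$; for $I\subseteq\{0,\dots,j\}$, $\hat\Phi_I$ is $\hat\Phi$ with the components $\hat\phi_i$, $i\notin I$, replaced by $0$ (same for $D\hat\Phi_I$, $D^2\hat\Phi_I$). $\hat I_A=\{i\in\{1,\dots,j\}:\hat\phi_i(\bar e)=0\}\cup\{0\}$, $\hat I_N=\{i\in\{1,\dots,j\}:\hat\phi_i(\bar e)<0\}$. (C5): $\hat\Phi$ is Fréchet differentiable at $\bar e$ with derivative $D\hat\Phi(\bar e)$ (components $D\hat\phi_i(\bar e)$, $D\hat\psi_l(\bar e)$), and for each $y\in\mathcal X$ there exists a vector $D^2\hat\Phi(\bar e)(y)\in\mathbb R^{1+j+k}$ (components $D^2\hat\phi_i(\bar e)(y)$, $D^2\hat\psi_l(\bar e)(y)$) such that for all $\alpha>0$, $C>0$ there is $\epsilon_0>0$ with $|\hat\Phi(\bar e+\epsilon y+\epsilon^2\eta)-\hat\Phi(\bar e)-\epsilon D\hat\Phi(\bar e)(y)-\epsilon^2D\hat\Phi(\bar e)(\eta)-\frac12\epsilon^2D^2\hat\Phi(\bar e)(y)|\le\alpha\epsilon^2$ for all $\eta$ with $|\eta|\le C$ and $\epsilon\in[0,\epsilon_0]$. Tangent sets: $v\in T_E^\flat(x)$ iff for every $h_n\to0^+$ there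 are $v_n\to v$ with $x+h_nv_n\in E$; for $v\in T_E^\flat(x)$, $w\in T_E^{\flat(2)}(x,v)$ iff for every $h_n\to0^+$ there are $w_n\to w$ with $x+h_nv+h_n^2w_n\in E$. *)

(* Defs.v *)
From HB Require Import structures.
From mathcomp Require Import all_boot all_order all_algebra.
From mathcomp Require Import all_classical all_reals all_analysis.
Set Implicit Arguments. Unset Strict Implicit. Unset Printing Implicit Defensive.
Import Order.TTheory GRing.Theory Num.Theory.
Import numFieldNormedType.Exports.
Local Open Scope classical_set_scope.
Local Open Scope ring_scope.

Section Defs.
Variable R : realType.

Definition adj_tangent {X : normedModType R} (E : set X) (x v : X) : Prop :=
  forall h : nat -> R, (forall n, 0 < h n) -> h @ \oo --> 0 ->
  exists vn : nat -> X, vn @ \oo --> v /\ forall n, E (x + h n *: vn n).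

Definition adj_tangent2 {X : normedModType R} (E : set X) (x v w : X) : Prop :=
  forall h : nat -> R, (forall n, 0 < h n) -> h @ \oo --> 0 ->
  exists wn : nat -> X, wn @ \oo --> w /\
    forall n, E (x + h n *: v + (h n ^+ 2) *: wn n).

Definition dotr {n} (l v : 'rV[R]_n) : R := \sum_(i < n) l ord0 i * v ord0 i.

Definition aff_hull {n} (S : set 'rV[R]_n) : set 'rV[R]_n :=
  [set v | exists m (p : 'I_m -> 'rV[R]_n) (t : 'I_m -> R),
     (forall i, S (p i)) /\ \sum_(i < m) t i = 1 /\ v = \sum_(i < m) t i *: p i].

Definition conv_hull {m n} (p : 'I_m -> 'rV[R]_n) : set 'rV[R]_n :=
  [set v | exists t : 'I_m -> R, (forall i, 0 <= t i) /\
     \sum_(i < m) t i = 1 /\ v = \sum_(i < m) t i *: p i].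

Definition rel_int {n} (A S : set 'rV[R]_n) : set 'rV[R]_n :=
  [set v | A v /\ exists r : R, 0 < r /\
     forall w, A w -> `|w - v| < r -> S w].

Definition rel_cball {n} (A : set 'rV[R]_n) (d : R) : set 'rV[R]_n :=
  [set v | A v /\ `|v| <= d].

End Defs.

(* Main.v *)
Require Import Defs.
From HB Require Import structures.
From mathcomp Require Import all_boot all_order all_algebra.
From mathcomp Require Import all_classical all_reals all_analysis.
From mathcomp Require Import ring lra.
Import Order.TTheory GRing.Theory Num.Theory.
Import numFieldNormedType.Exports.
Local Open Scope classical_set_scope.
Local Open Scope ring_scope.

Section Sep.
Local Set Implicit Arguments.
Context {R : realType}.

Lemma dotr_row_mx m n (a c : 'rV[R]_m) (b d : 'rV[R]_n) :
  dotr (row_mx a b) (row_mx c d) = dotr a c + dotr b d.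
Proof.
rewrite /dotr big_split_ord /=; congr (_ + _); apply: eq_bigr => i _.
  by rewrite !row_mxEl.
by rewrite !row_mxEr.
Qed.

Lemma dotrD n (l a b : 'rV[R]_n) : dotr l (a + b) = dotr l a + dotr l b.
Proof. by rewrite /dotr -big_split; apply: eq_bigr => i _; rewrite mxE mulrDr. Qed.

Lemma dotrZ n (l a : 'rV[R]_n) t : dotr l (t *: a) = t * dotr l a.
Proof. by rewrite /dotr mulr_sumr; apply: eq_bigr => i _; rewrite mxE mulrCA. Qed.

Lemma dotrN n (l a : 'rV[R]_n) : dotr l (- a) = - dotr l a.
Proof. by rewrite -scaleN1r dotrZ mulN1r. Qed.

Lemma dotrB n (l a b : 'rV[R]_n) : dotr l (a - b) = dotr l a - dotr l b.
Proof. by rewrite dotrD dotrN. Qed.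

Lemma dotr0l n (a : 'rV[R]_n) : dotr 0 a = 0.
Proof. by rewrite /dotr big1 // => i _; rewrite mxE mul0r. Qed.

Lemma dotrNl n (l a : 'rV[R]_n) : dotr (- l) a = - dotr l a.
Proof. by rewrite /dotr -sumrN; apply: eq_bigr => i _; rewrite mxE mulNr. Qed.

Lemma dotr_const1 (c a : R) : dotr (const_mx c : 'rV[R]_1) (const_mx a) = c * a.
Proof. by rewrite /dotr big_ord1 !mxE. Qed.

Lemma rV1_const (u : 'rV[R]_1) : u = const_mx (u ord0 ord0).
Proof. by apply/rowP => i; rewrite mxE ord1. Qed.

Lemma rV_split {m} (x : 'rV[R]_(1 + m)) :
  x = row_mx (const_mx (lsubmx x ord0 ord0)) (rsubmx x).
Proof. by rewrite -rV1_const hsubmxK. Qed.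

Lemma rV0_eq (x : 'rV[R]_0) : x = 0.
Proof. by apply/rowP => -[]. Qed.

Lemma hb_cone m (Q : 'rV[R]_m -> R -> Prop) :
  (forall x s y t, Q x s -> Q y t -> Q (x + y) (s + t)) ->
  (forall x s a, 0 < a -> Q x s -> Q (a *: x) (a * s)) ->
  (forall x, exists s, Q x s) ->
  ~ Q 0 1 ->
  exists L : 'rV[R]_m, forall x s, Q x s -> s <= dotr L x.
Proof.
elim: m Q => [|m IH].
  move=> Q Qadd Qsc Qcov Q01.
  exists 0 => x s Qxs; rewrite dotr0l (rV0_eq x) in Qxs *.
  rewrite leNgt; apply/negP => s0.
  apply: Q01; have si : 0 < s^-1 by rewrite invr_gt0.
  have := Qsc _ _ _ si Qxs.
  by rewrite scaler0 mulVf // gt_eqF.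
rewrite -[m.+1]/(1 + m)%N => Q Qadd Qsc Qcov Q01.
pose Q0 x' s := Q (row_mx 0 x' : 'rV_(1 + m)) s.
have [L' HL'] : exists L' : 'rV[R]_m, forall x s, Q0 x s -> s <= dotr L' x.
  apply: IH.
  - by move=> x s y t; rewrite /Q0 => H1 H2; have := Qadd _ _ _ _ H1 H2; rewrite add_row_mx addr0.
  - by move=> x s a a0; rewrite /Q0 => H; have := Qsc _ _ _ a0 H; rewrite scale_row_mx scaler0.
  - by move=> x; have [s Hs] := Qcov (row_mx 0 x); exists s.
  - by rewrite /Q0 row_mx0.
pose A := [set c | exists a x' s, 0 < a /\ Q (row_mx (const_mx a) x' : 'rV_(1 + m)) s /\
   c = (s - dotr L' x') / a].
pose B := [set c | exists a x' s, a < 0 /\ Q (row_mx (const_mx a) x' : 'rV_(1 + m)) s /\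
   c = (s - dotr L' x') / a].
have AB : forall a b, A a -> B b -> a <= b.
  move=> _ _ [a1 [x1 [s1 [a10 [Q1 ->]]]]] [a2 [x2 [s2 [a20 [Q2 ->]]]]].
  have a1i : 0 < a1^-1 by rewrite invr_gt0.
  have H1 := Qsc _ _ _ a1i Q1.
  have a2' : 0 < - a2 by rewrite oppr_gt0.
  have a2i : 0 < (- a2)^-1 by rewrite invr_gt0.
  have H2 := Qsc _ _ _ a2i Q2.
  have := Qadd _ _ _ _ H1 H2.
  rewrite !scale_row_mx add_row_mx.
  have -> : a1^-1 *: (const_mx a1 : 'rV[R]_1) + (- a2)^-1 *: const_mx a2 = 0.
    apply/rowP => i; rewrite !mxE mulVf ?gt_eqF // invrN mulNr mulVf ?lt_eqF //.
    by rewrite subrr.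
  move=> /HL'; rewrite dotrD !dotrZ => H.
  have -> : a2^-1 = - (- a2)^-1 by rewrite invrN opprK.
  move: H; set p := a1^-1; set q := (- a2)^-1; rewrite /=; nra.
have An : A !=set0.
  have [s Hs] := Qcov (row_mx (const_mx 1) 0).
  by exists ((s - dotr L' 0) / 1); exists 1, 0, s; split => //; rewrite ltr01.
have [b Bb] : B !=set0.
  have [s Hs] := Qcov (row_mx (const_mx (-1)) 0).
  by exists ((s - dotr L' 0) / (-1)); exists (-1), 0, s; split => //; rewrite ltrN10.
have Aub : has_ubound A by exists b => a Aa; exact: AB.
exists (row_mx (const_mx (sup A)) L') => x s Qxs.
rewrite (rV_split x) in Qxs *; rewrite dotr_row_mx dotr_const1.
move: Qxs; set a := lsubmx x ord0 ord0; set x' := rsubmx x => Qxs.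
have [a0|a0|a0] := ltgtP a 0.
- have : sup A <= (s - dotr L' x') / a.
    apply: ge_sup => // c Ac; apply: AB => //.
    by exists a, x', s.
  by rewrite ler_ndivlMr // => H; lra.
- have : (s - dotr L' x') / a <= sup A.
    by apply: ub_le_sup => //; exists a, x', s.
  by rewrite ler_pdivrMr // => H; lra.
- move: Qxs; rewrite a0 mulr0 add0r.
  have -> : (const_mx 0 : 'rV[R]_1) = 0 by apply/rowP => i; rewrite !mxE.
  exact: HL'.
Qed.

Lemma sep_cone n (P : set 'rV[R]_n) : P 0 ->
  (forall x y, P x -> P y -> P (x + y)) ->
  (forall t x, 0 < t -> P x -> P (t *: x)) ->
  (exists u, ~ P u) -> exists l, l != 0 /\ forall p, P p -> dotr l p <= 0.
Proof.
elim: n P => [|n IH].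
  by move=> P P0 _ _ [u]; rewrite (rV0_eq u).
rewrite -[n.+1]/(1 + n)%N => P P0 Padd Psc [u Pu].
pose P' x' := exists a, P (row_mx (const_mx a) x' : 'rV_(1 + n)).
have [[x' Px']|allP'] := pselect (exists x', ~ P' x').
  have [l' [l'0 Hl']] : exists l, l != 0 /\ forall p, P' p -> dotr l p <= 0.
    apply: IH.
    - exists 0; have -> : (const_mx 0 : 'rV[R]_1) = 0 by apply/rowP => i; rewrite !mxE.
      by rewrite row_mx0.
    - move=> x y [a Pa] [b Pb]; exists (a + b); have := Padd _ _ Pa Pb.
      rewrite add_row_mx; congr (P (row_mx _ _)); by apply/rowP => i; rewrite !mxE.
    - move=> t x t0 [a Pa]; exists (t * a); have := Psc _ _ t0 Pa.
      rewrite scale_row_mx; congr (P (row_mx _ _)); by apply/rowP => i; rewrite !mxE.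
    - by exists x'.
  exists (row_mx 0 l'); split.
    apply: contra l'0 => /eqP; rewrite -row_mx0 => /eq_row_mx [_ ->] //.
  move=> p Pp; rewrite (rV_split p) dotr_row_mx dotr0l add0r; apply: Hl'.
  by exists (lsubmx p ord0 ord0); rewrite -rV_split.
have {}allP' : forall x', P' x'.
  by move=> x'; apply: contrapT => H; apply: allP'; exists x'.
pose e (a : R) : 'rV[R]_(1 + n) := row_mx (const_mx a) 0.
have [sg [sg2 Psg]] : exists sg : R, sg * sg = 1 /\ ~ P (e sg).
  have [P1|P1] := pselect (P (e 1)); last by exists 1; rewrite mulr1.
  have [Pm1|Pm1] := pselect (P (e (-1))); last by exists (-1); rewrite mulrNN mulr1.
  exfalso; apply: Pu; rewrite (rV_split u).
  set a := lsubmx u ord0 ord0; set x := rsubmx u.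
  have [b Pb] := allP' x.
  have -> : row_mx (const_mx a) x = row_mx (const_mx b) x + e (a - b).
    rewrite add_row_mx addr0; congr row_mx; apply/rowP => i; rewrite !mxE; ring.
  have [ab|ab|ab] := ltgtP (a - b) 0.
  - have -> : e (a - b) = (b - a) *: e (-1).
      rewrite /e scale_row_mx scaler0; congr row_mx; apply/rowP => i; rewrite !mxE; ring.
    by apply: Padd => //; apply: Psc => //; lra.
  - have -> : e (a - b) = (a - b) *: e 1.
      rewrite /e scale_row_mx scaler0; congr row_mx; apply/rowP => i; rewrite !mxE; ring.
    by apply: Padd => //; apply: Psc => //; lra.
  - rewrite ab /e; have -> : (const_mx 0 : 'rV[R]_1) = 0 by apply/rowP => i; rewrite !mxE.
    by rewrite row_mx0 addr0.
pose Q x s := P (row_mx (const_mx (sg * s)) x : 'rV_(1 + n)).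
have [L HL] : exists L : 'rV[R]_n, forall x s, Q x s -> s <= dotr L x.
  apply: hb_cone.
  - move=> x s y t Qx Qy; have := Padd _ _ Qx Qy; rewrite /Q add_row_mx.
    congr (P (row_mx _ _)); by apply/rowP => i; rewrite !mxE; ring.
  - move=> x s a a0 Qx; have := Psc _ _ a0 Qx; rewrite /Q scale_row_mx.
    congr (P (row_mx _ _)); by apply/rowP => i; rewrite !mxE; ring.
  - move=> x; have [a Pa] := allP' x; exists (sg * a); rewrite /Q mulrA sg2 mul1r //.
  - by rewrite /Q mulr1.
exists (row_mx (const_mx sg) (- L)); split.
  apply/negP => /eqP /rowP /(_ (lshift n ord0)); rewrite row_mxEl !mxE => sg0.
  by move: sg2; rewrite sg0 mulr0 => /eqP; rewrite eq_sym oner_eq0.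
move=> p Pp; rewrite (rV_split p) dotr_row_mx dotr_const1 dotrNl.
set a := lsubmx p ord0 ord0; set x := rsubmx p.
have : Q x (sg * a) by rewrite /Q mulrA sg2 mul1r -rV_split.
move/HL; lra.
Qed.

Definition pv {k} (l : 'I_k.+2) : 'rV[R]_k.+1 :=
  \row_m ((val l == val m)%:R - (val l == k.+1)%:R).

Lemma entry_le {n} (x : 'rV[R]_n) i : `|x ord0 i| <= `|x|.
Proof.
rewrite [X in _ <= X]mx_normrE.
rewrite (bigD1 (ord0, i)) //=.
by rewrite le_max lexx.
Qed.

Lemma simplex k (rho : R) (w : 'rV[R]_k.+1) : 0 < rho ->
  exists t : 'I_k.+2 -> R, \sum_l t l = 1 /\ w = \sum_l t l *: (rho *: pv l) /\
    (`|w| <= rho / (2 * k.+1 + 1)%:R -> forall l, 0 <= t l).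
Proof.
move=> rho0.
pose s := (1 - (\sum_m w ord0 m) / rho) / (k.+2)%:R.
pose t (l : 'I_k.+2) := s + (if (val l < k.+1)%N then w ord0 (inord l) / rho else 0).
have tw : forall i : 'I_k.+1, t (widen_ord (leqnSn _) i) = s + w ord0 i / rho.
  by move=> i; rewrite /t /= ltn_ord; congr (_ + _ / _); congr (w _ _); apply/val_inj; rewrite /= inordK.
have tm : t ord_max = s by rewrite /t /= ltnn addr0.
exists t; split; last split.
- rewrite big_ord_recr /= tm.
  under eq_bigr => i _ do rewrite tw.
  rewrite big_split /= sumr_const card_ord -mulr_suml /s.
  set S := (\sum_m w ord0 m) / rho.
  have k1 : 0 <= (k.+1)%:R :> R by rewrite ler0n.
  rewrite -mulr_natr -[k.+2]addn1 natrD; field.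
  by rewrite gt_eqF // ltr_wpDl.
- apply/rowP => m; rewrite summxE big_ord_recr /= !mxE tm.
  rewrite (gtn_eqF (ltn_ord m)) eqxx.
  under eq_bigr => i _ do rewrite !mxE tw /= (ltn_eqF (ltn_ord i)).
  rewrite (bigD1 m) //= eqxx big1 => [|i /negbTE im]; last by rewrite val_eqE im subr0 mulr0 mulr0.
  rewrite /= subr0 mulr1 addr0 -[in LHS](_ : ord0 = 0) //.
  field; exact: lt0r_neq0.
- move=> wle l.
  have hsum : \sum_m w ord0 m <= `|w| *+ k.+1.
    apply: le_trans (_ : _ <= \sum_(m < k.+1) `|w|) _; last by rewrite sumr_const card_ord.
    apply: ler_sum => m _; exact: le_trans (ler_norm _) (entry_le _ _).
  have went : forall i, - (`|w| / rho) <= w ord0 i / rho.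
    move=> i; rewrite -mulNr ler_pM2r ?invr_gt0 //.
    by have := entry_le w i; rewrite ler_norml => /andP[].
  have tl : s - `|w| / rho <= t l.
    rewrite /t; case: ifP => _; rewrite lerD2l //.
    by rewrite oppr_le0 divr_ge0 // ltW.
  apply: le_trans tl.
  move: wle hsum; rewrite /s -mulr_natr -[k.+2]addn1 natrD natrD natrM.
  set K1 := (k.+1)%:R; set S := \sum_m w ord0 m; set nw := `|w|.
  have K10 : 0 <= K1 by rewrite ler0n.
  have nw0 : 0 <= nw by rewrite /nw normr_ge0.
  move=> wle hsum.
  set a := (1 - S / rho) / (K1 + 1).
  have ha : a * (K1 + 1) = 1 - S / rho by rewrite /a divfK // gt_eqF // ltr_wpDl.
  set e := nw / rho.
  have e0 : 0 <= e by rewrite divr_ge0 // ltW.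
  have he : e * (2%:R * K1 + 1) <= 1.
    have pos : 0 < 2%:R * K1 + 1 by apply: ltr_wpDl => //; apply: mulr_ge0.
    by rewrite /e mulrAC ler_pdivrMr // mul1r -ler_pdivlMr // -[2%:R * K1 + 1]mul1r.
  have hs : S / rho <= K1 * e.
    by rewrite /e mulrA ler_pM2r ?invr_gt0 // mulrC /K1 mulr_natr.
  rewrite subr_ge0; nra.
Qed.

Lemma conv_aff (V : lmodType R) (a b1 b2 : V) (mu : R) :
  mu *: (a + b1) + (1 - mu) *: (a + b2) = a + (mu *: b1 + (1 - mu) *: b2).
Proof.
rewrite !scalerDr addrACA -scalerDl.
by rewrite (_ : mu + (1 - mu) = 1) ?scale1r // addrCA subrr addr0.
Qed.

Lemma conv_sub (V : lmodType R) (a1 b1 a2 b2 : V) (mu nu : R) :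
  mu *: (a1 - b1) + nu *: (a2 - b2) = (mu *: a1 + nu *: a2) - (mu *: b1 + nu *: b2).
Proof. by rewrite !scalerBr opprD addrACA. Qed.

Lemma conv_neg (mu a b : R) : 0 <= mu <= 1 -> a < 0 -> b < 0 -> mu * a + (1 - mu) * b < 0.
Proof. move=> /andP[m0 m1] a0 b0; nra. Qed.
End Sep.

Theorem lemma4p1 (R : realType) (X : completeNormedModType R) (E : set X)
  (j k : nat) (phi : 'I_j.+1 -> X -> R) (psi : 'I_k -> X -> R)
  (D2phi : 'I_j.+1 -> X -> R) (D2psi : 'I_k -> X -> R)
  (eb y : X) :
  (0 < k)%N ->
  convex_set (E : set (convex_lmodType X)) ->
  (* eb is a minimizer of (OP) *)
  E eb -> (forall i : 'I_j.+1, (0 < val i)%N -> phi i eb <= 0) ->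
  (forall l, psi l eb = 0) ->
  (forall e, E e -> (forall i : 'I_j.+1, (0 < val i)%N -> phi i e <= 0) ->
     (forall l, psi l e = 0) -> phi ord0 eb <= phi ord0 e) ->
  phi ord0 eb = 0 ->
  (* (C5) *)
  (forall i, differentiable (phi i) eb) -> (forall l, differentiable (psi l) eb) ->
  (forall y' : X, forall alpha C : R, 0 < alpha -> 0 < C ->
     exists eps0 : R, 0 < eps0 /\
     forall (eta : X) (eps : R), `|eta| <= C -> 0 <= eps <= eps0 ->
       (forall i, `|phi i (eb + eps *: y' + eps ^+ 2 *: eta) - phi i eb
          - eps * 'd (phi i) eb y' - eps ^+ 2 * 'd (phi i) eb eta
          - 2^-1 * eps ^+ 2 * D2phi i y'| <= alpha * eps ^+ 2) /\
       (forall l, `|psi l (eb + eps *: y' + eps ^+ 2 *: eta) - psi l eb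
          - eps * 'd (psi l) eb y' - eps ^+ 2 * 'd (psi l) eb eta
          - 2^-1 * eps ^+ 2 * D2psi l y'| <= alpha * eps ^+ 2)) ->
  (* assumptions on y *)
  adj_tangent E eb y ->
  (forall i : 'I_j.+1, (val i == 0%N) || (phi i eb == 0) -> 'd (phi i) eb y <= 0) ->
  (forall l, 'd (psi l) eb y = 0) ->
  (exists w, adj_tangent2 E eb y w) ->
  let IA (i : 'I_j.+1) : bool := (val i == 0%N) || (phi i eb == 0) in
  let IN (i : 'I_j.+1) : bool := (0 < val i)%N && (phi i eb < 0) in
  let I0' (i : 'I_j.+1) : bool := IN i || (IA i && ('d (phi i) eb y < 0)) in
  let I0'' (i : 'I_j.+1) : bool := ~~ I0' i in
  let T2 : set X := [set w | adj_tangent2 E eb y w] in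
  let Kpsi_pt (x : X) : 'rV[R]_k :=
    \row_l ('d (psi l) eb x + 2^-1 * D2psi l y) in
  let K_pt (x : X) : 'rV[R]_(j.+1 + k) :=
    row_mx (\row_i (if I0'' i then 'd (phi i) eb x + 2^-1 * D2phi i y else 0))
           (Kpsi_pt x) in
  let K : set 'rV[R]_(j.+1 + k) := K_pt @` T2 in
  let Kpsi : set 'rV[R]_k := Kpsi_pt @` T2 in
  let Y : 'rV[R]_j.+1 := \row_i (if IA i then 'd (phi i) eb y else 0) in
  let Z : set 'rV[R]_j.+1 :=
    [set z | exists (a : 'rV[R]_j.+1) (lam : R),
       (forall i, a ord0 i < 0) /\ 0 < lam /\
       z = a - lam *: (\row_i phi i eb + Y)] in
  convex_set (K : set (convex_lmodType 'rV[R]_(j.+1 + k))) /\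
  convex_set (Kpsi : set (convex_lmodType 'rV[R]_k)) /\
  ((~ exists l : 'rV[R]_(j.+1 + k), l != 0 /\
       forall x z, T2 x -> Z z -> dotr l (K_pt x) <= dotr l (row_mx z 0)) ->
   exists (D : nat) (B : 'M[R]_(D, k)),
     (0 < D)%N /\ row_free B /\
     aff_hull Kpsi = [set v | (v <= B)%MS] /\
     exists (h : 'I_D.+1 -> X) (d0 : R),
       0 < d0 /\ (forall l, T2 (h l)) /\
       rel_cball (aff_hull Kpsi) d0 `<=`
         rel_int (aff_hull Kpsi) (conv_hull (fun l => Kpsi_pt (h l))) /\
       (forall l i, I0'' i -> 'd (phi i) eb (h l) + 2^-1 * D2phi i y < 0)).


Proof.
case: k psi D2psi => [|k] psi D2psi; first by case.
move=> k0 Econv Eeb feas psi0 opt phi0 dphi dpsi C5 ytan dphiy dpsiy [w0 Tw0].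
move=> IA IN I0' I0'' T2 Kpsi_pt K_pt K Kpsi Y Z.
have sE : forall a b : R, a *: b = a * b := fun _ _ => erefl.
have T2conv : forall x1 x2 (mu : R), 0 <= mu <= 1 -> T2 x1 -> T2 x2 ->
    T2 (mu *: x1 + (1 - mu) *: x2).
  move=> x1 x2 mu /andP[mu0 mu1] H1 H2 h hpos hcv.
  have [w1 [cw1 E1]] := H1 h hpos hcv.
  have [w2 [cw2 E2]] := H2 h hpos hcv.
  exists (fun n => mu *: w1 n + (1 - mu) *: w2 n); split.
    by apply: cvgD; apply: cvgZ => //; exact: cvg_cst.
  move=> n.
  have := Econv _ _ (Itv01 mu0 mu1) (mem_set (E1 n)) (mem_set (E2 n)).
  rewrite in_setE /conv /=.
  congr E; rewrite [unstable.onem _]/(1 - mu) conv_aff; congr (_ + _).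
  by rewrite scalerDr !scalerA mulrC [(1 - mu) * _]mulrC.
have K_aff : forall x1 x2 (mu : R),
    K_pt (mu *: x1 + (1 - mu) *: x2) = mu *: K_pt x1 + (1 - mu) *: K_pt x2.
  move=> x1 x2 mu; apply/rowP => i; rewrite !mxE; case: splitP => [i1 _|i2 _]; rewrite !mxE.
    by case: ifP => _; rewrite ?linearD ?linearZ /= ?sE; ring.
  by rewrite linearD !linearZ /= !sE; ring.
have Kpsi_aff : forall x1 x2 (mu : R),
    Kpsi_pt (mu *: x1 + (1 - mu) *: x2) = mu *: Kpsi_pt x1 + (1 - mu) *: Kpsi_pt x2.
  move=> x1 x2 mu; apply/rowP => i; rewrite !mxE linearD !linearZ /= !sE; ring.
have lam01 : forall lam : {i01 R}, 0 <= lam%:num <= 1.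
  by move=> lam; apply/andP; split; [exact: ge0 | exact: le1].
split.
  move=> a b lam; rewrite !in_setE => -[x1 Tx1 <-] [x2 Tx2 <-].
  exists (lam%:num *: x1 + (1 - lam%:num) *: x2); first exact: T2conv.
  by rewrite K_aff.
split.
  move=> a b lam; rewrite !in_setE => -[x1 Tx1 <-] [x2 Tx2 <-].
  exists (lam%:num *: x1 + (1 - lam%:num) *: x2); first exact: T2conv.
  by rewrite Kpsi_aff.
move=> nonsep.
pose n := (j.+1 + k.+1)%N.
pose vv : 'rV[R]_j.+1 := \row_i phi i eb + Y.
have Zconv : forall z1 z2 (mu : R), 0 <= mu <= 1 -> Z z1 -> Z z2 ->
    Z (mu *: z1 + (1 - mu) *: z2).
  move=> z1 z2 mu hmu [a1 [l1 [a1n [l10 ->]]]] [a2 [l2 [a2n [l20 ->]]]].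
  exists (mu *: a1 + (1 - mu) *: a2), (mu * l1 + (1 - mu) * l2); split; [|split].
  - by move=> i; rewrite !mxE; exact: conv_neg.
  - have l1n : - l1 < 0 by rewrite oppr_lt0.
    have l2n : - l2 < 0 by rewrite oppr_lt0.
    have := conv_neg _ _ _ hmu l1n l2n; lra.
  - by apply/rowP => i; rewrite !mxE; ring.
pose C := [set c : 'rV[R]_n | exists x z, T2 x /\ Z z /\ c = K_pt x - row_mx z 0].
have Cconv : forall c1 c2 (mu : R), 0 <= mu <= 1 -> C c1 -> C c2 ->
    C (mu *: c1 + (1 - mu) *: c2).
  move=> _ _ mu hmu [x1 [z1 [Tx1 [Zz1 ->]]]] [x2 [z2 [Tx2 [Zz2 ->]]]].
  exists (mu *: x1 + (1 - mu) *: x2), (mu *: z1 + (1 - mu) *: z2); split.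
    exact: T2conv.
  split; first exact: Zconv.
  rewrite conv_sub K_aff; congr (_ - _).
  by rewrite !scale_row_mx add_row_mx !scaler0 addr0.
pose z0 : 'rV[R]_j.+1 := const_mx (-1) - 1 *: vv.
have Zz0 : Z z0.
  exists (const_mx (-1)), 1; split; last by split => //; rewrite ltr01.
  by move=> i; rewrite mxE ltrN10.
have Cc0 : C (K_pt w0 - row_mx z0 0) by exists w0, z0.
pose P := [set p : 'rV[R]_n | exists t c, 0 <= t /\ C c /\ p = t *: c].
have P0 : P 0 by exists 0, (K_pt w0 - row_mx z0 0); rewrite scale0r lexx.
have Padd : forall p1 p2, P p1 -> P p2 -> P (p1 + p2).
  move=> _ _ [t1 [c1 [t10 [C1 ->]]]] [t2 [c2 [t20 [C2 ->]]]].
  have [T0|Tn0] := eqVneq (t1 + t2) 0.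
    have t1z : t1 = 0 by lra.
    have t2z : t2 = 0 by lra.
    by exists 0, c1; rewrite t1z t2z !scale0r addr0 lexx.
  have Tp : 0 < t1 + t2 by rewrite lt_neqAle eq_sym Tn0 addr_ge0.
  exists (t1 + t2), ((t1 / (t1 + t2)) *: c1 + (1 - t1 / (t1 + t2)) *: c2).
  split; first exact: ltW.
  split.
    apply: Cconv C1 C2; apply/andP; split; first by rewrite divr_ge0 // ltW.
    by rewrite ler_pdivrMr // mul1r lerDl.
  rewrite scalerDr !scalerA; congr (_ *: _ + _ *: _); field; exact: Tn0.
have Psc : forall t p, 0 < t -> P p -> P (t *: p).
  move=> t _ t0 [u [c [u0 [Cc ->]]]]; exists (t * u), c; split.
    by rewrite mulr_ge0 // ltW.
  by rewrite scalerA.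
have allP : forall p, P p.
  move=> p; apply: contrapT => nPp; apply: nonsep.
  have [l [l0 Hl]] := sep_cone P P0 Padd Psc (ex_intro _ p nPp).
  exists l; split => // x z Tx Zz.
  have : P (1 *: (K_pt x - row_mx z 0)) by exists 1, (K_pt x - row_mx z 0); split => //; split => //; exists x, z.
  by move/Hl; rewrite scale1r dotrB subr_le0.
have C0 : C 0.
  pose e : 'rV[R]_n := const_mx 1.
  have e0 : forall t (c : 'rV[R]_n), 0 <= t -> e = t *: c \/ - e = t *: c -> 0 < t.
    move=> t c t0 H; rewrite lt_neqAle t0 andbT; apply/eqP => t_0.
    have : e = 0 by case: H; rewrite -t_0 scale0r // => /eqP; rewrite oppr_eq0 => /eqP.
    move/rowP/(_ (lshift _ ord0)); rewrite !mxE => /eqP; by rewrite oner_eq0.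
  have [t [c [t0 [Cc ec]]]] := allP e.
  have [t' [c' [t0' [Cc' ec']]]] := allP (- e).
  have tp : 0 < t by apply: (e0 t c) => //; left.
  have tp' : 0 < t' by apply: (e0 t' c') => //; right.
  have Tn0 : t + t' != 0 by rewrite gt_eqF // addr_gt0.
  have := Cconv c c' (t / (t + t')).
  have -> : t / (t + t') *: c + (1 - t / (t + t')) *: c' = (t + t')^-1 *: (t *: c + t' *: c').
    rewrite scalerDr !scalerA; congr (_ *: _ + _ *: _); field; exact: Tn0.
  rewrite -ec -ec' subrr scaler0; apply => //.
  apply/andP; split; first by rewrite divr_ge0 // ltW // addr_gt0.
  by rewrite ler_pdivrMr ?addr_gt0 // mul1r lerDl ltW.
pose q (l : 'I_k.+2) : 'rV[R]_n := row_mx (0 : 'rV[R]_j.+1) (pv l).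
have /choice [tc Htc] : forall l, exists tc : R * 'rV[R]_n,
    0 <= tc.1 /\ C tc.2 /\ q l = tc.1 *: tc.2.
  by move=> l; have [t [c H]] := allP (q l); exists (t, c).
pose rho := (1 + \sum_l (tc l).1)^-1.
have sum0 : 0 <= \sum_l (tc l).1 by apply: sumr_ge0 => l _; case: (Htc l).
have rho0 : 0 < rho by rewrite invr_gt0 ltr_wpDr.
have rhot : forall l, 0 <= rho * (tc l).1 <= 1.
  move=> l; have [t0 _] := Htc l; apply/andP; split; first by rewrite mulr_ge0 // ltW.
  rewrite mulrC ler_pdivrMr ?ltr_wpDr // mul1r.
  rewrite (bigD1 l) //=.
  have : 0 <= \sum_(i < k.+2 | i != l) (tc i).1.
    by apply: sumr_ge0 => i _; case: (Htc i).
  lra.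
have /choice [xz Hxz] : forall l, exists xz : X * 'rV[R]_j.+1,
    T2 xz.1 /\ Z xz.2 /\ rho *: q l = K_pt xz.1 - row_mx xz.2 0.
  move=> l; have [t0 [Cc qe]] := Htc l.
  have := Cconv _ _ _ (rhot l) Cc C0.
  rewrite scaler0 addr0 -scalerA -qe => -[x [z [Tx [Zz ->]]]].
  by exists (x, z).
pose h l := (xz l).1.
have hT : forall l, T2 (h l) by move=> l; case: (Hxz l).
have hsplit : forall l, 0 = \row_i (if I0'' i then 'd (phi i) eb (h l) + 2^-1 * D2phi i y else 0) - (xz l).2
    /\ rho *: pv l = Kpsi_pt (h l).
  move=> l; have [_ [_ e]] := Hxz l; move: e.
  rewrite /q /K_pt scale_row_mx scaler0 opp_row_mx add_row_mx oppr0 addr0.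
  by move/eq_row_mx.
have hpsi : forall l, Kpsi_pt (h l) = rho *: pv l by move=> l; case: (hsplit l).
have I0f : forall i, I0'' i -> phi i eb = 0 /\ 'd (phi i) eb y = 0 /\ IA i.
  move=> i; rewrite /I0'' /I0' /IN /IA negb_or negb_and => /andP[HN HA].
  have IAi : (val i == 0%N) || (phi i eb == 0).
    case: eqP => [//|/eqP vi /=].
    have := feas i; rewrite lt0n vi => /(_ isT) fle.
    by move: HN; rewrite lt0n vi /= -leNgt => fge; apply/eqP; apply/le_anti; rewrite fle fge.
  rewrite IAi /= -leNgt in HA.
  have dle := dphiy i IAi.
  split; last by split => //; apply/le_anti; rewrite dle HA.
  move: IAi => /orP[/eqP vi|/eqP //].
  by rewrite (_ : i = ord0) //; apply/val_inj.
have hphi : forall l i, I0'' i -> 'd (phi i) eb (h l) + 2^-1 * D2phi i y < 0.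
  move=> l i Hi; have [e1 _] := hsplit l.
  have [_ [Zz _]] := Hxz l.
  move: Zz => [a [lam [an [lam0 ze]]]].
  move: e1 => /rowP /(_ i); rewrite !mxE Hi ze !mxE.
  have [f0 [d0 IAi]] := I0f i Hi.
  rewrite f0 IAi d0 addr0 mulr0 subr0.
  have := an i; lra.
have affall : forall v, aff_hull Kpsi v.
  move=> v; have [t [t1 [tv _]]] := simplex rho v rho0.
  exists k.+2, (fun l => Kpsi_pt (h l)), t; split; first by move=> l; exists (h l).
  split => //; rewrite tv; apply: eq_bigr => l _; by rewrite hpsi.
exists k.+1, 1%:M; split => //; split; first by rewrite row_free_unit unitmx1.
split.
  by apply/seteqP; split => v _ //; rewrite /= submx1.
pose D := rho / (2 * k.+1 + 1)%:R.
have D0 : 0 < D by rewrite divr_gt0.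
exists h, (D / 2); split; first by rewrite divr_gt0.
split => //; split => //.
move=> v [_ vle]; split; first exact: affall.
exists (D / 2); split; first by rewrite divr_gt0.
move=> w _ wv.
have [t [t1 [tw tpos]]] := simplex rho w rho0.
exists t; split; last first.
  split => //; rewrite tw; apply: eq_bigr => l _; by rewrite hpsi.
apply: tpos.
have : `|w| <= `|w - v| + `|v| by rewrite -{1}(subrK v w) ler_normD.
rewrite -/D; lra.
Qed.
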